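(* Let $\mathbf C\in\mathbb R^{n\times n}$ and $\mathbf C_1,\dots,\mathbf C_m\in\mathbb R^{n\times n}$ be symmetric positive semidefinite matrices with $\sum_{i=1}^m\mathbf C_i=\mathbf C$. Then $$\sum_{i=1}^m\mathbf C_i\mathbf C^\dagger\mathbf C_i\preceq\mathbf C.$$
   Context: $\mathbf C^\dagger$ is the Moore–Penrose pseudoinverse; $\mathbf X\preceq\mathbf Y$ means $\mathbf Y-\mathbf X$ is positive semidefinite. *)

(* Defs.v *)
(* Real matrices are modelled over an arbitrary real field R. *)
From HB Require Import structures.
From mathcomp Require Import all_boot all_order all_algebra.
Set Implicit Arguments. Unset Strict Implicit. Unset Printing Implicit Defensive.
Import Order.TTheory GRing.Theory Num.Theory.
Local Open Scope ring_scope.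

Definition psd (R : realFieldType) (n : nat) (A : 'M[R]_n) : Prop :=
  A^T = A /\ forall v : 'cV[R]_n, 0 <= (v^T *m A *m v) 0 0.

Definition loewner_le (R : realFieldType) (n : nat) (X Y : 'M[R]_n) : Prop :=
  psd (Y - X).

(* X is the Moore-Penrose pseudoinverse of A (the four Penrose conditions;
   over a real field the adjoint is the transpose). *)
Definition is_pinv (R : realFieldType) (n : nat) (A X : 'M[R]_n) : Prop :=
  [/\ A *m X *m A = A, X *m A *m X = X,
      (A *m X)^T = A *m X & (X *m A)^T = X *m A].

(* Main.v *)
Require Import Defs.
From HB Require Import structures.
From mathcomp Require Import all_boot all_order all_algebra.
Import Order.TTheory GRing.Theory Num.Theory.
Local Open Scope ring_scope.

Lemma pinv_uniq (R : realFieldType) (n : nat) (A X Y : 'M[R]_n) :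
  is_pinv A X -> is_pinv A Y -> X = Y.
Proof.
case=> AXA XAX AXs XAs [AYA YAY AYs YAs].
have eX : X = X *m A *m Y.
  have e1 : X = X *m (X^T *m A^T) by rewrite -trmx_mul AXs mulmxA.
  have e2 : A^T = A^T *m Y^T *m A^T by rewrite -!trmx_mul mulmxA AYA.
  rewrite {1}e1 e2.
  have -> : X^T *m (A^T *m Y^T *m A^T) = (A *m X) ^T *m (A *m Y)^T
    by rewrite !trmx_mul !mulmxA.
  by rewrite AXs AYs !mulmxA XAX.
have eY : Y = X *m A *m Y.
  have e1 : Y = A^T *m Y^T *m Y by rewrite -trmx_mul YAs YAY.
  have e2 : A^T = A^T *m X^T *m A^T by rewrite -!trmx_mul mulmxA AXA.
  rewrite {1}e1 e2.
  have -> : A^T *m X^T *m A^T *m Y^T = (X *m A) ^T *m (Y *m A)^T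
    by rewrite !trmx_mul !mulmxA.
  by rewrite XAs YAs -mulmxA YAY.
by rewrite eY.
Qed.

Lemma pinv_sym (R : realFieldType) (n : nat) (A X : 'M[R]_n) :
  A^T = A -> is_pinv A X -> X^T = X.
Proof.
move=> As H; symmetry; apply: (@pinv_uniq _ _ A X X^T H); case: H => AXA XAX AXs XAs.
split.
- by have := congr1 trmx AXA; rewrite !trmx_mul As mulmxA.
- by have := congr1 trmx XAX; rewrite !trmx_mul As mulmxA.
- by rewrite trmx_mul trmxK As -{1}XAs trmx_mul As.
- by rewrite trmx_mul trmxK As -{1}AXs trmx_mul As.
Qed.

Lemma key (R : realFieldType) (n : nat) (C X Ci : 'M[R]_n) (v : 'cV[R]_n) :
  X^T = X -> Ci^T = Ci -> X *m C *m X = X ->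
  let y := X *m (Ci *m v) in
  (v - y)^T *m Ci *m (v - y) + y^T *m (C - Ci) *m y =
  v^T *m Ci *m v - v^T *m (Ci *m X *m Ci) *m v.
Proof.
move=> Xs Cs XCX y.
have yT : y^T = v^T *m Ci *m X by rewrite /y !trmx_mul Xs Cs.
have vyT : (v - y)^T = v^T - v^T *m Ci *m X by rewrite raddfB /= yT.
rewrite vyT yT /y.
rewrite !(mulmxBl, mulmxBr) -!mulmxA.
have XCX' : forall w : 'cV[R]_n, X *m (C *m (X *m w)) = X *m w.
  by move=> w; rewrite !mulmxA XCX.
rewrite XCX'.
by rewrite subrK.
Qed.

Lemma quad_sum (R : realFieldType) (n m : nat) (P : pred 'I_m) (F : 'I_m -> 'M[R]_n) (v : 'cV[R]_n) :
  (v^T *m (\sum_(i | P i) F i) *m v) 0 0 = \sum_(i | P i) (v^T *m F i *m v) 0 0.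
Proof. by rewrite mulmx_sumr mulmx_suml summxE. Qed.

Lemma add00 (R : realFieldType) (A B : 'M[R]_1) : (A + B) 0 0 = A 0 0 + B 0 0.
Proof. by rewrite mxE. Qed.

Theorem lemma1 (R : realFieldType) (n m : nat) (C Cdag : 'M[R]_n)
  (Cs : 'I_m -> 'M[R]_n) :
  (forall i, psd (Cs i)) -> psd C -> \sum_(i < m) Cs i = C ->
  is_pinv C Cdag ->
  loewner_le (\sum_(i < m) (Cs i *m Cdag *m Cs i)) C.
Proof.
move=> HCs [CT _] HC Hp.
have Xs := @pinv_sym _ _ C Cdag CT Hp.
have XCX : Cdag *m C *m Cdag = Cdag by case: Hp.
split.
  rewrite raddfB /= raddf_sum /= CT; congr (_ - _); apply: eq_bigr => i _.
  by rewrite !trmx_mul Xs (proj1 (HCs i)) mulmxA.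
move=> v.
rewrite -{1}HC -sumrB quad_sum; apply: sumr_ge0 => i _.
have Cis := proj1 (HCs i).
rewrite mulmxBr mulmxBl -(@key _ _ C Cdag (Cs i) v Xs Cis XCX) add00.
apply: addr_ge0; first exact: (proj2 (HCs i)).
rewrite -HC (bigD1 i) //= addrC addrK quad_sum.
by apply: sumr_ge0 => j _; exact: (proj2 (HCs j)).
Qed.
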